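(* Let $\mathbb{F}$ be a finite field and let $n_x,n_y,m$ be positive integers with $n_x+n_y\le m$. Let $B\in\mathcal{B}(n_x,n_y,m)$ be a bilinear sequence whose quadratic homogeneous part $\tilde{B}\in\mathcal{B}^{(h)}(n_x,n_y,m)$ is $\mathbf{y}$-semiregular. Then $$d_{\mathbf{y}\text{-}ff}(B)=\min\left\{d\in\mathbb{Z}^+ \;:\; d>\frac{n_x(n_y-1)}{m-n_x}+1\right\}.$$
   Context: Variables $\mathbf{x}=(x_1,\dots,x_{n_x})$, $\mathbf{y}=(y_1,\dots,y_{n_y})$. A bilinear polynomial is $f=\mathbf{x}\mathbf{A}\mathbf{y}^{\top}+\mathbf{b}\mathbf{x}^{\top}+\mathbf{c}\mathbf{y}^{\top}+d$ with $\mathbf{A}\in\mathbb{F}^{n_x\times n_y}$, $\mathbf{b}\in\mathbb{F}^{n_x}$, $\mathbf{c}\in\mathbb{F}^{n_y}$, $d\in\mathbb{F}$; its quadratic homogeneous part is $\mathbf{x}\mathbf{A}\mathbf{y}^{\top}$. $\mathcal{B}(n_x,n_y,m)$ is the set of length-$m$ sequences of bilinear polynomials and $\mathcal{B}^{(h)}(n_x,n_y,m)$ those with zero linear and constant parts; $\tilde B=(\tilde f_1,\dots,\tilde f_m)$ is the sequence of quadratic parts of $B$. For $j\ge2$, $\mathbf{M}_{\mathbf{y},j}(\tilde B)$ is the matrix whose rows are the coefficient vectors of the $m\binom{n_y+j-3}{j-2}$ polynomials $\mathfrak{m}\tilde f_i$, $1\le i\le m$, $\mathfrak{m}$ a monomial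 of $\mathbb{F}[\mathbf{y}]$ of degree exactly $j-2$. $\tilde B$ is $\mathbf{y}$-$d$-regular if $\mathrm{Rank}(\mathbf{M}_{\mathbf{y},j}(\tilde B))=m\binom{n_y+j-3}{j-2}$ for $j=2,\dots,d$; $d_{\mathbf{y},reg}(\tilde B)$ is the minimum $d$ with $\mathrm{Rank}(\mathbf{M}_{\mathbf{y},d}(\tilde B))=n_x\binom{n_y+d-2}{d-1}$; $\tilde B$ is $\mathbf{y}$-semiregular if it is $\mathbf{y}$-$d$-regular for all $d<d_{\mathbf{y},reg}(\tilde B)$. A syzygy of $\tilde B$ is $(g_1,\dots,g_m)$ with $\sum g_i\tilde f_i=0$; it is trivial if it lies in the $\mathbb{F}[\mathbf{x},\mathbf{y}]$-module generated by $\tilde f_i\mathbf{e}_j-\tilde f_j\mathbf{e}_i$ ($1\le i<j\le m$, $\mathbf{e}_i$ the standard basis vectors). $B$ has a $\mathbf{y}$-degree fall at degree $d$ if there is a sequence $G\in\mathbb{F}[\mathbf{y}]^m$ of homogeneous polynomials of degree $d-2$ which is a non-trivial syzygy of $\tilde B$; the $\mathbf{y}$-first fall degree $d_{\mathbf{y}\text{-}ff}(B)$ is the smallest such $d$. *)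

(* Defs.v *)
From HB Require Import structures.
From mathcomp Require Import all_boot all_order all_algebra.
From mathcomp Require Import mpoly.
Set Implicit Arguments. Unset Strict Implicit. Unset Printing Implicit Defensive.
Import Order.TTheory GRing.Theory Num.Theory.
Local Open Scope ring_scope.

Section Bilinear.
Variables (F : fieldType) (nx ny : nat).

Definition xvar (k : 'I_nx) : {mpoly F[nx + ny]} := 'X_(lshift ny k).
Definition yvar (l : 'I_ny) : {mpoly F[nx + ny]} := 'X_(rshift nx l).

(* A bilinear polynomial  x A y^T + b x^T + c y^T + d, given by its data. *)
Record bilin := Bilin {
  bA : 'M[F]_(nx, ny);
  bb : 'rV[F]_nx;
  bc : 'rV[F]_ny;
  bd : F }.

Definition bpoly (f : bilin) : {mpoly F[nx + ny]} :=
  \sum_(k < nx) \sum_(l < ny) bA f k l *: (xvar k * yvar l)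
  + \sum_(k < nx) bb f 0 k *: xvar k
  + \sum_(l < ny) bc f 0 l *: yvar l
  + (bd f)%:MP.

Definition quad (f : bilin) : bilin := Bilin (bA f) 0 0 0.

Definition ymono (mm : 'X_{1..ny}) : {mpoly F[nx + ny]} :=
  \prod_(l < ny) yvar l ^+ mm l.

Definition ymon_deg (k : nat) := {mm : 'X_{1..ny < k.+1} | mdeg mm == k}.

Variable m : nat.

Notation My_rows j := ('I_m * {mm : 'X_{1..ny < (j - 2).+1} | mdeg mm == (j - 2)%N})%type.
(* columns: all monomials of F[x,y] of total degree <= j; the products
   m * f_i (bidegree (1, j-1)) are supported on these, and extra zero
   columns do not change the rank *)
Notation My_cols j := ('X_{1..(nx + ny) < j.+1}).

Definition My (j : nat) (Bt : 'I_m -> bilin) :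
    'M[F]_(#|{: My_rows j}|, #|{: My_cols j}|) :=
  \matrix_(r, c)
    let rr : My_rows j := enum_val r in
    let cc : My_cols j := enum_val c in
    (ymono (val rr.2) * bpoly (Bt rr.1))@_(bmnm cc).

Definition y_d_regular (Bt : 'I_m -> bilin) (d : nat) : Prop :=
  forall j, (2 <= j <= d)%N ->
    \rank (My j Bt) = (m * 'C(ny + j - 3, j - 2))%N.

Definition My_full_col (Bt : 'I_m -> bilin) (d : nat) : Prop :=
  \rank (My d Bt) = (nx * 'C(ny + d - 2, d - 1))%N.

Definition is_dyreg (Bt : 'I_m -> bilin) (d : nat) : Prop :=
  (2 <= d)%N /\ My_full_col Bt d /\
  forall d', (2 <= d' < d)%N -> ~ My_full_col Bt d'.

Definition y_semiregular (Bt : 'I_m -> bilin) : Prop :=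
  exists d0, is_dyreg Bt d0 /\ forall d, (d < d0)%N -> y_d_regular Bt d.

Definition is_syzygy (Bt : 'I_m -> bilin) (g : 'I_m -> {mpoly F[nx + ny]}) :=
  \sum_(i < m) g i * bpoly (Bt i) = 0.

Definition trivial_syzygy (Bt : 'I_m -> bilin) (g : 'I_m -> {mpoly F[nx + ny]}) :=
  exists h : 'I_m -> 'I_m -> {mpoly F[nx + ny]},
    forall k : 'I_m,
      g k = \sum_(i < m) \sum_(j < m | (i < j)%N)
              h i j * (bpoly (Bt i) * (j == k)%:R - bpoly (Bt j) * (i == k)%:R).

Definition is_ypoly (p : {mpoly F[nx + ny]}) : Prop :=
  forall mm, mm \in msupp p -> forall k : 'I_nx, mm (lshift ny k) = 0%N.

Definition y_degree_fall (B : 'I_m -> bilin) (d : nat) : Prop :=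
  (2 <= d)%N /\
  exists g : 'I_m -> {mpoly F[nx + ny]},
    (forall i, is_ypoly (g i) /\ g i \is (d - 2).-homog) /\
    is_syzygy (fun i => quad (B i)) g /\
    ~ trivial_syzygy (fun i => quad (B i)) g.

Definition y_first_fall_degree (B : 'I_m -> bilin) (d : nat) : Prop :=
  y_degree_fall B d /\ forall d', (d' < d)%N -> ~ y_degree_fall B d'.

End Bilinear.

(* Main.v *)
Require Import Defs.
From HB Require Import structures.
From mathcomp Require Import all_boot all_order all_algebra.
From mathcomp Require Import mpoly.
From mathcomp Require Import zify ring.
Import Order.TTheory GRing.Theory Num.Theory.
Local Open Scope ring_scope.
Set Implicit Arguments. Unset Strict Implicit. Unset Printing Implicit Defensive.

Section Work.
Variables (F : fieldType) (nx ny : nat).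

Definition emb (mm : 'X_{1..ny}) : 'X_{1..nx+ny} :=
  [multinom (match split i with inl _ => 0%N | inr l => mm l end) | i < nx + ny].

Lemma emb_l mm k : emb mm (lshift ny k) = 0%N.
Proof. by rewrite mnmE; have := unsplitK (inl k : 'I_nx + 'I_ny) => /= ->. Qed.

Lemma emb_r mm l : emb mm (rshift nx l) = mm l.
Proof. by rewrite mnmE; have := unsplitK (inr l : 'I_nx + 'I_ny) => /= ->. Qed.

Lemma ord_split_ind (Pr : 'I_(nx + ny) -> Prop) :
  (forall k, Pr (lshift ny k)) -> (forall l, Pr (rshift nx l)) -> forall i, Pr i.
Proof. move=> Pl PR i; rewrite -(splitK i); case: (split i) => [k|l]; [exact: Pl | exact: PR]. Qed.

Lemma ymonoE mm : ymono F nx mm = 'X_[emb mm].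
Proof.
rewrite mpolyXE_id big_split_ord /= big1 ?mul1r; last first.
  by move=> k _; rewrite emb_l expr0.
by apply: eq_bigr => l _; rewrite emb_r.
Qed.

Lemma mdeg_emb mm : mdeg (emb mm) = mdeg mm.
Proof.
rewrite !mdegE big_split_ord /= big1 ?add0n; last by move=> k _; rewrite emb_l.
by apply: eq_bigr => l _; rewrite emb_r.
Qed.

Lemma emb_inj : injective emb.
Proof.
move=> m1 m2 H; apply/mnmP => l.
by have := congr1 (fun c : 'X_{1..nx+ny} => c (rshift nx l)) H; rewrite /= !emb_r.
Qed.

Lemma embD m1 m2 : emb (m1 + m2) = (emb m1 + emb m2)%MM.
Proof.
apply/mnmP; apply: ord_split_ind => [k|l]; rewrite mnmDE ?emb_l ?emb_r //.
by rewrite mnmDE.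
Qed.

Lemma emb1 l : emb U_(l)%MM = U_(rshift nx l)%MM.
Proof.
apply/mnmP; apply: ord_split_ind => [k|l']; rewrite ?emb_l ?emb_r !mnm1E.
  by rewrite eq_rlshift.
by rewrite eq_rshift.
Qed.

Definition ypart (c : 'X_{1..nx+ny}) : 'X_{1..ny} := [multinom c (@rshift nx ny l) | l < ny].

Lemma emb_ypart (c : 'X_{1..nx+ny}) : (forall k, c (lshift ny k) = 0%N) -> emb (ypart c) = c.
Proof.
move=> H; apply/mnmP; apply: ord_split_ind => [k|l]; rewrite ?emb_l ?emb_r ?H //.
by rewrite mnmE.
Qed.

Definition mon (k : 'I_nx) (b : 'X_{1..ny}) : 'X_{1..nx+ny} := (U_(lshift ny k) + emb b)%MM.

Lemma mon_inj k1 k2 b1 b2 : mon k1 b1 = mon k2 b2 -> k1 = k2 /\ b1 = b2.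
Proof.
move=> H.
have Hk : k1 = k2.
  have := congr1 (fun c : 'X_{1..nx+ny} => c (lshift ny k1)) H.
  rewrite /mon /= !mnmDE !emb_l !mnm1E eqxx eq_lshift.
  by case: eqP.
split=> //; apply: emb_inj; apply/mnmP => i.
have := congr1 (fun c : 'X_{1..nx+ny} => c i) H.
by rewrite /mon /= !mnmDE Hk => /addnI.
Qed.

Lemma sum_ymon k (mu0 : 'X_{1..ny}) (G : 'X_{1..ny} -> F) :
  mdeg mu0 = k -> (forall mu, mu != mu0 -> G mu = 0) ->
  \sum_(b : {mm : 'X_{1..ny < k.+1} | mdeg mm == k}) G (val (val b)) = G mu0.
Proof.
move=> Hd HG.
have h1 : (mdeg mu0 < k.+1)%N by rewrite Hd.
pose b0 := BMultinom h1.
have h2 : (mdeg b0 == k)%N by rewrite /= Hd.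
pose c0 : {mm : 'X_{1..ny < k.+1} | mdeg mm == k} := exist _ b0 h2.
rewrite (bigD1 c0) //= big1 ?addr0 // => b nb; apply: HG.
apply: contra nb => /eqP e; apply/eqP; apply: val_inj; apply: val_inj; exact: e.
Qed.

Lemma card_ymon k : (0 < ny)%N ->
  #|{: {mm : 'X_{1..ny < k.+1} | mdeg mm == k}}| = 'C(k + ny.-1, k).
Proof.
case: ny => // n _.
rewrite card_sig cardE -(size_basis n k) -(size_map (fun b : 'X_{1..n.+1 < k.+1} => bmnm b)).
apply: perm_size; apply: uniq_perm.
- by rewrite map_inj_uniq ?enum_uniq //; apply: val_inj.
- exact: uniq_basis.
move=> x; rewrite -basis_cover; apply/mapP/idP => [[b]|Hx].
  by rewrite mem_enum inE => Hb ->.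
have h1 : (mdeg x < k.+1)%N by rewrite (eqP Hx).
by exists (BMultinom h1); rewrite // mem_enum inE.
Qed.


Lemma bpoly_quad (f : bilin F nx ny) : bpoly (quad f) =
  \sum_(k < nx) \sum_(l < ny) bA f k l *: 'X_[U_(lshift ny k) + U_(rshift nx l)].
Proof.
have h1 : \sum_(k < nx) bb (quad f) 0 k *: xvar F ny k = 0.
  by apply: big1 => k _; rewrite mxE scale0r.
have h2 : \sum_(l < ny) bc (quad f) 0 l *: yvar F nx l = 0.
  by apply: big1 => k _; rewrite mxE scale0r.
rewrite /bpoly h1 h2 /= !addr0.
apply: eq_bigr => k _; apply: eq_bigr => l _.
by rewrite mpolyXD.
Qed.

Lemma ymono_quad mm f : ymono F nx mm * bpoly (quad f) =
  \sum_(k < nx) \sum_(l < ny) bA f k l *: 'X_[mon k (mm + U_(l))].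
Proof.
rewrite ymonoE bpoly_quad mulr_sumr; apply: eq_bigr => k _.
rewrite mulr_sumr; apply: eq_bigr => l _.
rewrite -scalerAr -mpolyXD; congr (_ *: 'X_[_]).
apply/mnmP => i; rewrite /mon embD emb1 !mnmDE; lia.
Qed.

Lemma coef_quad mm f c : (ymono F nx mm * bpoly (quad f))@_c =
  \sum_(k < nx) \sum_(l < ny) bA f k l * (mon k (mm + U_(l)) == c)%:R.
Proof.
rewrite ymono_quad raddf_sum; apply: eq_bigr => k _.
rewrite raddf_sum; apply: eq_bigr => l _.
by rewrite /= mcoeffZ mcoeffX.
Qed.

Lemma quad_homog (f : bilin F nx ny) : bpoly (quad f) \is 2.-homog.
Proof.
rewrite bpoly_quad; apply: rpred_sum => k _; apply: rpred_sum => l _.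
by apply: rpredZ; rewrite dhomogX /= mdegD !mdeg1.
Qed.

Lemma ymono_homog (mm : 'X_{1..ny}) : ymono F nx mm \is (mdeg mm).-homog.
Proof. by rewrite ymonoE dhomogX /= mdeg_emb. Qed.

Lemma rep_y (p : {mpoly F[nx + ny]}) k : is_ypoly p -> p \is k.-homog ->
  p = \sum_(mm : {mm : 'X_{1..ny < k.+1} | mdeg mm == k})
        p@_(emb (val (val mm))) *: ymono F nx (val (val mm)).
Proof.
move=> Hy Hh; apply/mpolyP => c; rewrite raddf_sum /=.
under eq_bigr do rewrite mcoeffZ ymonoE mcoeffX.
case: (boolP (c \in msupp p)) => Hc.
  have Hx : forall k, c (lshift ny k) = 0%N by apply: Hy.
  have Hd : mdeg c = k by have := dhomog_mf Hh Hc.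
  rewrite (@sum_ymon k (ypart c) (fun mu => p@_(emb mu) * (emb mu == c)%:R)).
  - by rewrite emb_ypart // eqxx mulr1.
  - by rewrite -mdeg_emb emb_ypart.
  move=> mu nmu; case: eqP => [e|]; last by rewrite mulr0.
  by case/eqP: nmu; apply: emb_inj; rewrite e emb_ypart.
rewrite [LHS]memN_msupp_eq0 // big1 // => mm _.
case: eqP => [e|]; last by rewrite mulr0.
by rewrite e memN_msupp_eq0 ?mul0r.
Qed.

End Work.

Section Phi.
Variables (F : fieldType) (nx ny : nat).
Definition lq : (nx + ny).-tuple {mpoly F[nx + ny]} :=
  [tuple (if (i < nx)%N then 0 else 'X_i) | i < nx + ny].
Local Notation phi := (comp_mpoly lq).

Lemma phi_x k : phi (xvar F ny k) = 0.
Proof. by rewrite /xvar comp_mpolyXU -tnth_nth tnth_mktuple /= ltn_ord. Qed.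

Lemma phi_y l : phi (yvar F nx l) = yvar F nx l.
Proof.
rewrite /yvar comp_mpolyXU -tnth_nth tnth_mktuple /=.
by rewrite ltnNge leq_addr.
Qed.

Lemma phi_ymono mm : phi (ymono F nx mm) = ymono F nx mm.
Proof.
rewrite /ymono rmorph_prod; apply: eq_bigr => l _.
by rewrite rmorphXn; congr (_ ^+ _); apply: phi_y.
Qed.

Lemma phi_quad (f : bilin F nx ny) : phi (bpoly (quad f)) = 0.
Proof.
have e : forall k l, phi (bA f k l *: 'X_[U_(lshift ny k) + U_(rshift nx l)]) = 0.
  move=> k l; rewrite comp_mpolyZ mpolyXD rmorphM.
  transitivity (bA f k l *: (0 * phi 'X_(rshift nx l))).
    by congr (_ *: (_ * _)); apply: phi_x.
  by rewrite mul0r scaler0.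
rewrite bpoly_quad raddf_sum big1 // => k _; rewrite raddf_sum big1 // => l _.
exact: e.
Qed.

Lemma phi_term (f g : bilin F nx ny) p (a b : nat) :
  phi (p * (bpoly (quad f) * a%:R - bpoly (quad g) * b%:R)) = 0.
Proof.
transitivity (phi p * (0 * phi a%:R - 0 * phi b%:R)).
  by rewrite rmorphM rmorphB !rmorphM; congr (_ * (_ * _ - _ * _)); apply: phi_quad.
by rewrite !mul0r subrr mulr0.
Qed.

End Phi.

Section Mat.
Variables (F : fieldType) (nx ny m : nat) (B : 'I_m -> bilin F nx ny) (j : nat).
Local Notation Bt := (fun i => quad (B i)).
Local Notation YM k := {mm : 'X_{1..ny < k.+1} | mdeg mm == k}.
Local Notation Rw := ('I_m * YM (j - 2))%type.

Definition gv (v : 'rV[F]_#|{: Rw}|) (i : 'I_m) : {mpoly F[nx+ny]} :=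
  \sum_(mm : YM (j - 2)) v 0 (enum_rank (i, mm)) *: ymono F nx (val (val mm)).

Lemma vMy v c : (v *m My j Bt) 0 c =
  (\sum_i gv v i * bpoly (Bt i))@_(bmnm (enum_val c)).
Proof.
rewrite mxE (reindex (@enum_rank _)) /=; last first.
  by apply: onW_bij; exists enum_val => x; [exact: enum_rankK | exact: enum_valK].
rewrite raddf_sum /=.
under [RHS]eq_bigr => i _ do rewrite /gv mulr_suml raddf_sum /=.
rewrite pair_bigA /=; apply: eq_bigr => -[i mm] _ /=.
by rewrite mxE enum_rankK -scalerAl mcoeffZ.
Qed.

Lemma L3 : \rank (My j Bt) = #|{: Rw}| ->
  forall g : 'I_m -> {mpoly F[nx + ny]},
  (forall i, is_ypoly (g i) /\ g i \is (j - 2).-homog) ->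
  is_syzygy Bt g -> forall i, g i = 0.
Proof.
move=> Hr g Hg Hs.
pose v : 'rV[F]_#|{: Rw}| :=
  \row_r (g (enum_val r).1)@_(emb nx (val (val (enum_val r).2))).
have Hgv i : g i = gv v i.
  have [Hy Hh] := Hg i.
  rewrite {1}(rep_y Hy Hh) /gv; apply: eq_bigr => mm _.
  by rewrite mxE enum_rankK.
have Hv : v *m My j Bt = 0.
  apply/matrixP => a c; rewrite ord1 vMy mxE.
  under eq_bigr => i _ do rewrite -Hgv.
  by rewrite Hs mcoeff0.
have v0 : v = 0.
  by apply/eqP; rewrite -(mulmx_free_eq0 _ (_ : row_free (My j Bt))) ?Hv // /row_free Hr.
move=> i; rewrite Hgv v0 /gv big1 // => mm _; by rewrite mxE scale0r.
Qed.

Lemma gv_coef v i c : (gv v i)@_c =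
  \sum_(mm : YM (j - 2)) v 0 (enum_rank (i, mm)) * (emb nx (val (val mm)) == c)%:R.
Proof.
rewrite /gv raddf_sum; apply: eq_bigr => mm _.
by rewrite /= mcoeffZ ymonoE mcoeffX.
Qed.

Lemma gv_ypoly v i : is_ypoly (gv v i).
Proof.
move=> c Hc k; apply/eqP; apply/negP => /negP hne.
move: Hc; rewrite mcoeff_msupp gv_coef big1 ?eqxx // => mm _.
case: eqP => [e|]; last by rewrite mulr0.
by move: hne; rewrite -e emb_l eqxx.
Qed.

Lemma gv_homog v i : gv v i \is (j - 2).-homog.
Proof.
apply: rpred_sum => mm _; apply: rpredZ.
by have := ymono_homog F nx (val (val mm)); rewrite (eqP (valP mm)).
Qed.

Lemma gv_phi v i : comp_mpoly (lq F nx ny) (gv v i) = gv v i.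
Proof.
rewrite /gv raddf_sum; apply: eq_bigr => mm _.
by rewrite /= comp_mpolyZ phi_ymono.
Qed.

Lemma L4 : (2 <= j)%N -> (\rank (My j Bt) < #|{: Rw}|)%N -> y_degree_fall B j.
Proof.
move=> Hj Hr; split=> //.
have nfree : ~~ row_free (My j Bt) by rewrite /row_free neq_ltn Hr.
set K := kermx (My j Bt).
have K0 : K != 0 by rewrite /K kermx_eq0.
have : [exists i0, row i0 K != 0].
  apply: contraNT K0 => /existsPn H; apply/eqP/row_matrixP => i; rewrite row0.
  by have := H i; rewrite negbK => /eqP.
case/existsP => i0 Hi0.
set v := row i0 K.
have Hv : v *m My j Bt = 0 by rewrite /v -row_mul mulmx_ker row0.
exists (gv v); split; [|split].
- by move=> i; split; [apply: gv_ypoly | apply: gv_homog].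
- rewrite /is_syzygy; apply/mpolyP => c; rewrite mcoeff0.
  case: (boolP (mdeg c < j.+1)%N) => h.
    have := vMy v (enum_rank (BMultinom h)); rewrite enum_rankK Hv mxE /= => <-.
    by [].
  apply: (@dhomog_nemf_coeff _ _ mdeg j).
    apply: rpred_sum => i _.
    have := dhomogM (gv_homog v i) (quad_homog (B i)).
    by rewrite subnK.
  by rewrite /=; apply: contra h => /eqP ->.
- move=> [h Hh].
  have : [exists r, v 0 r != 0].
    apply: contraNT Hi0 => /existsPn H; apply/eqP/rowP => r.
    by have := H r; rewrite negbK => /eqP ->; rewrite mxE.
  case/existsP => r Hr0.
  case E: (enum_val r) => [i1 mm1].
  have Hc : (gv v i1)@_(emb nx (val (val mm1))) = v 0 r.
    rewrite gv_coef (bigD1 mm1) //= eqxx mulr1 -E enum_valK big1 ?addr0 // => mm nmm.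
    case: eqP => [e|]; last by rewrite mulr0.
    by case/negP: nmm; apply/eqP; do 2 apply: val_inj; exact: (emb_inj e).
  have : gv v i1 = 0.
    rewrite -gv_phi Hh raddf_sum big1 // => a _; rewrite raddf_sum big1 // => b _.
    exact: phi_term.
  by move=> e; move: Hr0; rewrite -Hc e mcoeff0 eqxx.
Qed.

Local Notation T := ('I_nx * YM (j - 1))%type.

Definition Xm : 'M[F]_(#|{: Rw}|, #|{: T}|) := \matrix_(r, t)
  \sum_(l < ny) bA (B (enum_val r).1) (enum_val t).1 l *
     ((val (val (enum_val r).2) + U_(l))%MM == val (val (enum_val t).2))%:R.

Definition Ym : 'M[F]_(#|{: T}|, #|{: 'X_{1..(nx + ny) < j.+1}}|) := \matrix_(t, c)
  (mon (enum_val t).1 (val (val (enum_val t).2)) == bmnm (enum_val c))%:R.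

Lemma sumT (G : 'I_nx -> YM (j - 1) -> F) :
  \sum_(t : T) G t.1 t.2 = \sum_k \sum_b G k b.
Proof. by rewrite pair_bigA. Qed.

Lemma My_fact : (2 <= j)%N -> My j Bt = Xm *m Ym.
Proof.
move=> Hj; apply/matrixP => r c; rewrite /My !mxE /=.
rewrite (reindex (@enum_rank _)) /=; last first.
  by apply: onW_bij; exists enum_val => x; [exact: enum_rankK | exact: enum_valK].
under eq_bigr => t _ do rewrite !mxE enum_rankK.
move: (enum_val r) (bmnm (enum_val c)) => [i mm] cc /=.
rewrite coef_quad.
rewrite (sumT (fun k b => (\sum_(l < ny) bA (B i) k l *
     ((val (val mm) + U_(l))%MM == val (val b))%:R) *
     (mon k (val (val b)) == cc)%:R)).
apply: eq_bigr => k _.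
under [RHS]eq_bigr do rewrite mulr_suml.
rewrite exchange_big /=; apply: eq_bigr => l _.
rewrite (@sum_ymon F ny (j - 1) (val (val mm) + U_(l))%MM
   (fun mu => bA (B i) k l * ((val (val mm) + U_(l))%MM == mu)%:R * (mon k mu == cc)%:R)).
- by rewrite eqxx mulr1.
- by rewrite mdegD mdeg1 (eqP (valP mm)); lia.
by move=> mu /negbTE; rewrite eq_sym => ->; rewrite mulr0 mul0r.
Qed.

Lemma L2 : (2 <= j)%N -> (0 < ny)%N ->
  (\rank (My j Bt) <= nx * 'C(j - 1 + ny.-1, j - 1))%N.
Proof.
move=> Hj Hny; rewrite (My_fact Hj).
apply: leq_trans (mulmx_max_rank _ _) _.
by rewrite card_prod card_ord card_ymon.
Qed.

Lemma L1 : (0 < ny)%N -> #|{: Rw}| = (m * 'C(j - 2 + ny.-1, j - 2))%N.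
Proof. by move=> Hny; rewrite card_prod card_ord card_ymon. Qed.

End Mat.
Lemma bound_iff (nx ny m d : nat) : (nx < m)%N -> (0 < d)%N ->
  ((nx * (ny - 1))%:R / (m - nx)%:R + 1 < (d%:R : rat)) =
  (nx * (ny - 1) < (d - 1) * (m - nx))%N.
Proof.
move=> Hm Hd.
have Hp : (0 : rat) < (m - nx)%:R by rewrite ltr0n subn_gt0.
have -> : (d%:R : rat) = (d - 1)%:R + 1 by rewrite -[in LHS](subnK Hd) natrD.
by rewrite ltrD2r ltr_pdivrMr // -natrM ltr_nat.
Qed.

Lemma bin_rel (ny j : nat) : (0 < ny)%N -> (2 <= j)%N ->
  ('C(j - 1 + ny.-1, j - 1) * (j - 1) = 'C(j - 2 + ny.-1, j - 2) * (ny + j - 2))%N.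
Proof.
case: ny => // n _; case: j => [|[|j]] // _.
have -> : (j.+2 - 1 = j.+1)%N by lia.
have -> : (j.+2 - 2 = j)%N by lia.
have -> : (n.+1 + j.+2 - 2 = (j + n).+1)%N by lia.
have := mul_bin_diag (j + n).+1 j; rewrite /= -addSn /=; lia.
Qed.

Lemma ar (nx ny m j : nat) : (0 < ny)%N -> (nx <= m)%N -> (2 <= j)%N ->
  let a := 'C(j - 2 + ny.-1, j - 2) in let K := 'C(j - 1 + ny.-1, j - 1) in
  ((nx * K < m * a) = (nx * (ny - 1) < (j - 1) * (m - nx)))%N /\
  ((nx * K <= m * a) = (nx * (ny - 1) <= (j - 1) * (m - nx)))%N.
Proof.
move=> Hny Hm Hj a K.
have HK := @bin_rel ny j Hny Hj; rewrite -/a -/K in HK.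
have Ha : (0 < a)%N by rewrite bin_gt0 leq_addr.
have Hj1 : (0 < j - 1)%N by lia.
have E1 : (nx * K < m * a)%N = (nx * K * (j - 1) < m * a * (j - 1))%N by rewrite ltn_pmul2r.
have E2 : (nx * K <= m * a)%N = (nx * K * (j - 1) <= m * a * (j - 1))%N by rewrite leq_pmul2r.
rewrite E1 E2 -mulnA HK.
have F1 : (nx * (a * (ny + j - 2)) = a * (nx * (ny + j - 2)))%N by ring.
have F2 : (m * a * (j - 1) = a * (m * (j - 1)))%N by ring.
rewrite F1 F2 ltn_pmul2l // leq_pmul2l //.
split; apply/idP/idP; nia.
Qed.

Unset Implicit Arguments.

Theorem proposition4 (F : finFieldType) (nx ny m : nat) :
  (0 < nx)%N -> (0 < ny)%N -> (0 < m)%N -> (nx + ny <= m)%N ->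
  forall B : 'I_m -> bilin F nx ny,
  y_semiregular (fun i => quad (B i)) ->
  forall d : nat,
    (0 < d)%N ->
    ((nx * (ny - 1))%:R / (m - nx)%:R + 1 < (d%:R : rat)) ->
    (forall d' : nat, (0 < d')%N ->
       ((nx * (ny - 1))%:R / (m - nx)%:R + 1 < (d'%:R : rat)) -> (d <= d')%N) ->
    y_first_fall_degree B d.
Proof.
move=> Hnx Hny Hm Hle B [d0 [[Hd0 [Hfull Hmin0]] Hreg]] d Hd Hbnd Hmin.
have Hnm : (nx < m)%N by lia.
rewrite bound_iff // in Hbnd.
have Hmin' : forall d', (0 < d')%N -> (nx * (ny - 1) < (d' - 1) * (m - nx))%N -> (d <= d')%N.
  by move=> d' H1 H2; apply: Hmin => //; rewrite bound_iff.
have Hd2 : (2 <= d)%N.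
  case: d Hd Hbnd {Hmin Hmin'} => [|[|d]] //; by rewrite /= mul0n ltn0.
split.
  apply: L4 => //.
  apply: leq_ltn_trans (L2 B Hd2 Hny) _.
  rewrite [X in (_ < X)%N]L1 //; have [H1 _] := ar Hny (ltnW Hnm) Hd2; by rewrite H1.
move=> d' Hd' [Hd'2 [g [Hg [Hs Hnt]]]]; apply: Hnt.
have Hrank : \rank (My d' (fun i => quad (B i))) = #|{: 'I_m * {mm : 'X_{1..ny < (d' - 2).+1} | mdeg mm == (d' - 2)%N}}|.
  rewrite [RHS]L1 //.
  case: (ltnP d' d0) => Hdd.
    rewrite (Hreg d' Hdd d') ?Hd'2 ?leqnn //; congr (_ * 'C(_, _))%N; lia.
  have Hr0 := rank_leq_row (My d0 (fun i => quad (B i))).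
  rewrite Hfull [X in (_ <= X)%N]L1 // in Hr0.
  have [H1 H2] := ar Hny (ltnW Hnm) Hd0.
  have Hc : ('C(ny + d0 - 2, d0 - 1) = 'C(d0 - 1 + ny.-1, d0 - 1))%N by congr 'C(_, _); lia.
  rewrite Hc H2 in Hr0.
  have Hlt : ~~ (nx * (ny - 1) < (d0 - 1) * (m - nx))%N.
    apply/negP => H; have := Hmin' d0 (ltnW Hd0) H; lia.
  have Heq : d' = d0.
    apply/eqP; rewrite eqn_leq Hdd andbT; apply/negP => Hgt.
    have : (d <= d')%N.
      apply: Hmin'; first lia.
      apply: leq_ltn_trans Hr0 _.
      rewrite ltn_pmul2r ?subn_gt0 //; lia.
    lia.
  subst d'.
  rewrite Hfull Hc; apply/eqP; rewrite eqn_leq.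
  by rewrite H2 Hr0 /= leqNgt H1.
have H0 := L3 Hrank Hg Hs.
exists (fun _ _ => 0) => k; rewrite H0 big1 // => a _; rewrite big1 // => b _; by rewrite mul0r.
Qed.
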